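(* If the finite symmetric two-player game $(X,\pi)$ has no finite population evolutionary stable strategy (fESS), then imitation is subject to a money pump.
   Context: A symmetric two-player game $(X,\pi)$ has common action set $X$ and payoff $\pi:X\times X\to\mathbb{R}$ ($\pi(x,y)$ = payoff of the player choosing $x$ against $y$). An action $x^*\in X$ is a fESS if $\pi(x^*,x)\ge\pi(x,x^* )$ for all $x\in X$. Relative payoff: $\Delta(x,y)=\pi(x,y)-\pi(y,x)$. Imitate-the-best: given initial $y_0\in X$ and any opponent sequence $(x_t)_{t\ge0}$, $y_t=x_{t-1}$ if $\Delta(x_{t-1},y_{t-1})>0$ and $y_t=y_{t-1}$ otherwise. Imitation is not subject to a money pump if there is $M\in\mathbb{R}_+$ such that for every $y_0\in X$ and every sequence $(x_t)$, $\limsup_{T\to\infty}\sum_{t=0}^T\Delta(x_t,y_t)\le M$; otherwise it is subject to a money pump. *)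

(* Defs.v *)
From Stdlib Require Import Reals.
From Coquelicot Require Import Coquelicot.
From mathcomp Require Import ssreflect ssrbool eqtype fintype.
Open Scope R_scope.

Section Game.
Context {X : finType}.
Variable pi : X -> X -> R.

Definition Delta (x y : X) : R := pi x y - pi y x.

Definition is_fESS (xs : X) : Prop := forall x : X, pi xs x >= pi x xs.

Fixpoint imitate (y0 : X) (xs : nat -> X) (t : nat) : X :=
  match t with
  | O => y0
  | S t' => let y := imitate y0 xs t' in
            if Rlt_dec 0 (Delta (xs t') y) then xs t' else y
  end.

Definition cum_rel_payoff (y0 : X) (xs : nat -> X) (T : nat) : R :=
  sum_f_R0 (fun t => Delta (xs t) (imitate y0 xs t)) T.

Definition not_money_pump : Prop :=
  exists M : R, 0 <= M /\
    forall (y0 : X) (xs : nat -> X),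
      Rbar_le (LimSup_seq (cum_rel_payoff y0 xs)) (Rbar.Finite M).

Definition subject_to_money_pump : Prop := ~ not_money_pump.
End Game.

(* Main.v *)
Require Import Defs.
From Stdlib Require Import Reals Lra Lia ClassicalEpsilon Classical.
From Coquelicot Require Import Coquelicot.
From mathcomp Require Import ssreflect ssrbool eqtype fintype seq.
Open Scope R_scope.

Lemma eps_list (X : finType) (h : X -> R) (Hh : forall y, 0 < h y) (l : seq X) :
  exists e, 0 < e /\ forall y, y \in l -> e <= h y.
Proof.
  elim: l => [|a l [e [He1 He2]]].
  - exists 1; split; [lra| by []].
  - exists (Rmin e (h a)); split.
    + apply Rmin_pos; auto.
    + move=> y; rewrite in_cons; case/orP => [/eqP ->|Hy].
      apply Rmin_r. eapply Rle_trans; [apply Rmin_l| auto].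
Qed.

Theorem corollary1 (X : finType) (pi : X -> X -> R) (HX : inhabited X) :
  ~ (exists xs : X, is_fESS pi xs) -> subject_to_money_pump pi.
Proof.
  intros Hno.
  assert (Hf : forall y : X, exists x : X, 0 < Defs.Delta pi x y).
  { intros y. apply NNPP; intros Hc. apply Hno. exists y. intros x.
    apply Rnot_lt_ge. intros Hl. apply Hc. exists x. unfold Defs.Delta. lra. }
  set f := fun y => proj1_sig (constructive_indefinite_description _ (Hf y)).
  assert (Hfp : forall y, 0 < Defs.Delta pi (f y) y).
  { intros y. unfold f. destruct (constructive_indefinite_description _ (Hf y)); auto. }
  destruct HX as [y0].
  destruct (eps_list X (fun y => Defs.Delta pi (f y) y) Hfp (enum X)) as [e [He He2]].
  assert (He3 : forall y, e <= Defs.Delta pi (f y) y).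
  { intros y. apply He2. by rewrite mem_enum. }
  pose g := fix g (n : nat) : X := match n with O => y0 | S n => f (g n) end.
  pose xs := fun n => f (g n).
  assert (Hi : forall t, imitate pi y0 xs t = g t).
  { induction t as [|t IH]; simpl; auto. rewrite IH.
    destruct (Rlt_dec _ _) as [Hp|Hn]; first by [].
    exfalso; apply Hn; apply Hfp. }
  assert (Hlow : forall T, INR (S T) * e <= cum_rel_payoff pi y0 xs T).
  { unfold cum_rel_payoff. induction T as [|T IH].
        - simpl. specialize (He3 y0). unfold xs. simpl. lra.
    - change (INR (S (S T)) * e <= sum_f_R0 (fun t => Defs.Delta pi (xs t) (imitate pi y0 xs t)) T
         + Defs.Delta pi (xs (S T)) (imitate pi y0 xs (S T))).
      rewrite (Hi (S T)) (S_INR (S T)).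
      specialize (He3 (g (S T))). unfold xs in IH |- *. lra. }
  intros [M [_ HM]]. specialize (HM y0 xs).
  assert (Hinf : LimSup_seq (cum_rel_payoff pi y0 xs) = p_infty).
  { apply is_LimSup_seq_unique. simpl. intros K N.
    destruct (INR_unbounded (K / e)) as [k Hk].
    exists (N + k)%nat. split. lia.
    eapply Rlt_le_trans; [|apply Hlow].
    assert (K < INR k * e).
    { apply Rmult_lt_reg_r with (/ e). apply Rinv_0_lt_compat; auto.
      rewrite Rmult_assoc Rinv_r. 2: lra. rewrite Rmult_1_r. exact Hk. }
    assert (INR k <= INR (S (N + k))) by (apply le_INR; lia).
    nra. }
  rewrite Hinf in HM. exact HM.
Qed.
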